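(* Let $S$ be an operator system that is positively generated, i.e. $S^{sa}=S^+-S^+$. Then for each $n\ge1$, $M_n(S)^{sa}=M_n(S)^+-M_n(S)^+$.
   Context: An operator system here is a (possibly nonunital) matrix ordered operator space $S$ (operator space with completely isometric involution and closed matrix cones $M_n(S)^+\subseteq M_n(S)^{sa}$) that admits a completely isometric complete order embedding into $B(H)$ for some Hilbert space $H$. *)

(* Defs.v *)
From mathcomp Require Import all_boot all_order all_algebra.
From mathcomp Require Import reals complex.
Set Implicit Arguments. Unset Strict Implicit. Unset Printing Implicit Defensive.
Import Order.TTheory GRing.Theory Num.Theory.
Local Open Scope ring_scope.

Section Defs.
Variable R : realType.
Local Notation C := (R[i]).
Variable H : lmodType C.
Variable ip : H -> H -> C.   (* inner product, linear in the first variable *)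

Definition inner_product : Prop :=
  [/\ (forall (a : C) (x1 x2 y : H), ip (a *: x1 + x2) y = a * ip x1 y + ip x2 y),
      (forall x y : H, ip y x = (ip x y)^*),
      (forall x : H, 0 <= ip x x) &
      (forall x : H, ip x x = 0 -> x = 0)].

(* completeness for the norm ||x|| = sqrt <x,x> (stated with squared norms) *)
Definition ip_complete : Prop :=
  forall u : nat -> H,
    (forall e : C, 0 < e -> exists N : nat, forall m n : nat,
        (N <= m)%N -> (N <= n)%N -> ip (u m - u n) (u m - u n) < e) ->
    exists l : H, forall e : C, 0 < e -> exists N : nat, forall n : nat,
        (N <= n)%N -> ip (u n - l) (u n - l) < e.

Definition hilbert_space : Prop := inner_product /\ ip_complete.

Definition bounded_operator (T : H -> H) : Prop :=
  (forall (a : C) (x y : H), T (a *: x + y) = a *: T x + T y) /\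
  (exists M : C, 0 <= M /\ forall x : H, ip (T x) (T x) <= M * ip x x).

Definition is_adjoint (T T' : H -> H) : Prop :=
  forall x y : H, ip (T x) y = ip x (T' y).

(* A (concrete, possibly nonunital) operator system: a self-adjoint linear
   subspace S of B(H), with the matrix order inherited from B(H^n). *)
Definition operator_system (S : (H -> H) -> Prop) : Prop :=
  [/\ (forall T, S T -> bounded_operator T),
      S (fun _ => 0),
      (forall (a : C) (T U : H -> H), S T -> S U -> S (fun x => a *: T x + U x)) &
      (forall T, S T -> exists T', S T' /\ is_adjoint T T')].

Definition in_Mn (S : (H -> H) -> Prop) (n : nat) (X : 'M[H -> H]_n) : Prop :=
  forall i j, S (X i j).

Definition mx_selfadjoint (n : nat) (X : 'M[H -> H]_n) : Prop :=
  forall i j, is_adjoint (X i j) (X j i).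

Definition mx_positive (n : nat) (X : 'M[H -> H]_n) : Prop :=
  forall xi : 'I_n -> H, 0 <= \sum_(i < n) \sum_(j < n) ip (X i j (xi j)) (xi i).

Definition mx_diff (n : nat) (X P Q : 'M[H -> H]_n) : Prop :=
  forall i j (x : H), X i j x = P i j x - Q i j x.

Definition mx_positively_generated (S : (H -> H) -> Prop) (n : nat) : Prop :=
  forall X : 'M[H -> H]_n, in_Mn S X -> mx_selfadjoint X ->
    exists P Q : 'M[H -> H]_n,
      [/\ in_Mn S P, mx_positive P, in_Mn S Q, mx_positive Q & mx_diff X P Q].

Definition positively_generated (S : (H -> H) -> Prop) : Prop :=
  forall T : H -> H, S T -> is_adjoint T T ->
    exists P Q : H -> H,
      [/\ S P, (forall x, 0 <= ip (P x) x), S Q, (forall x, 0 <= ip (Q x) x) &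
          (forall x, T x = P x - Q x)].
End Defs.

(* Main.v *)
Require Import Defs.
From mathcomp Require Import all_boot all_order all_algebra.
From mathcomp Require Import reals complex.
From mathcomp Require Import ring.
From Stdlib Require Import FunctionalExtensionality IndefiniteDescription.
Set Implicit Arguments. Unset Strict Implicit. Unset Printing Implicit Defensive.
Import Order.TTheory GRing.Theory Num.Theory.
Local Open Scope ring_scope.

Section Aux.
Variable R : realType.
Local Notation C := (R[i]).
Variable H : lmodType C.
Variable ip : H -> H -> C.
Hypothesis hip : inner_product ip.

Lemma ipDl x y z : ip (x + y) z = ip x z + ip y z.
Proof. case: hip => h _ _ _. by have := h 1 x y z; rewrite scale1r mul1r. Qed.

Lemma ip0l z : ip 0 z = 0.
Proof.
have h : ip 0 z = ip 0 z + ip 0 z by rewrite -ipDl addr0.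
by apply: (addrI (ip 0 z)); rewrite addr0 -h.
Qed.

Lemma ipZl a x z : ip (a *: x) z = a * ip x z.
Proof. case: hip => h _ _ _. by have := h a x 0 z; rewrite !addr0 ip0l addr0. Qed.

Lemma ipC x y : ip y x = (ip x y)^*.
Proof. by case: hip. Qed.

Lemma ipZr a x z : ip z (a *: x) = a^* * ip z x.
Proof. by rewrite (ipC (a *: x)) ipZl rmorphM /= -ipC. Qed.

Lemma ipDr z x y : ip z (x + y) = ip z x + ip z y.
Proof. by rewrite (ipC (x + y)) ipDl rmorphD /= -!ipC. Qed.

Lemma ip0r z : ip z 0 = 0.
Proof. by rewrite (ipC 0) ip0l rmorph0. Qed.

Lemma ip_suml I (r : seq I) (P : pred I) (F : I -> H) z :
  ip (\sum_(i <- r | P i) F i) z = \sum_(i <- r | P i) ip (F i) z.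
Proof. exact: (big_morph (fun u => ip u z) (fun x y => ipDl x y z) (ip0l z)). Qed.

Lemma ip_sumr I (r : seq I) (P : pred I) (F : I -> H) z :
  ip z (\sum_(i <- r | P i) F i) = \sum_(i <- r | P i) ip z (F i).
Proof. exact: (big_morph (fun u => ip z u) (fun x y => ipDr z x y) (ip0r z)). Qed.

Definition lin (T : H -> H) := forall a x y, T (a *: x + y) = a *: T x + T y.

Lemma lin0 T : lin T -> T 0 = 0.
Proof.
move=> hT; have h : T 0 = T 0 + T 0 by rewrite -{1}(addr0 0) -{1}(scale1r 0) hT scale1r.
by apply: (addrI (T 0)); rewrite addr0 -h.
Qed.

Lemma linD T : lin T -> forall x y, T (x + y) = T x + T y.
Proof. by move=> hT x y; rewrite -{1}(scale1r x) hT scale1r. Qed.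

Lemma linZ T : lin T -> forall a x, T (a *: x) = a *: T x.
Proof. by move=> hT a x; rewrite -(addr0 (a *: x)) hT lin0 // addr0. Qed.

Lemma lin_sum T : lin T -> forall I (r : seq I) (F : I -> H),
  T (\sum_(i <- r) F i) = \sum_(i <- r) T (F i).
Proof. move=> hT I r F; exact: (big_morph T (linD hT) (lin0 hT)). Qed.

Definition posop (T : H -> H) := forall x, 0 <= ip (T x) x.

Definition rk n (s : C) (v : 'I_n -> C) (A : H -> H) : 'M[H -> H]_n :=
  \matrix_(k < n, l < n) (fun x : H => @GRing.scale _ H (s * v k * (v l)^*) (A x)).

Lemma rkE n s (v : 'I_n -> C) A k l x : rk s v A k l x = (s * v k * (v l)^*) *: A x.
Proof. by rewrite /rk mxE. Qed.

Lemma rk_pos n (s : C) (v : 'I_n -> C) A : 0 <= s -> lin A -> posop A ->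
  mx_positive ip (rk s v A).
Proof.
move=> s0 hA pA xi.
pose y := \sum_(l < n) (v l)^* *: xi l.
have -> : \sum_(i < n) \sum_(j < n) ip (rk s v A i j (xi j)) (xi i) = s * ip (A y) y.
  rewrite /y lin_sum // ip_suml mulr_sumr exchange_big /=.
  apply: eq_bigr => k _; rewrite ip_sumr mulr_sumr.
  apply: eq_bigr => l _.
  rewrite rkE ipZl linZ // ipZr. rewrite (ipZl ((v k)^*)) conjCK; ring.
by apply: mulr_ge0 => //; apply: pA.
Qed.

Definition Psum n I (r : seq I) (F : I -> 'M[H -> H]_n) : 'M[H -> H]_n :=
  \matrix_(k < n, l < n) (fun x : H => \sum_(m <- r) F m k l x).

Lemma PsumE n I (r : seq I) (F : I -> 'M[H -> H]_n) k l x :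
  Psum r F k l x = \sum_(m <- r) F m k l x.
Proof. by rewrite /Psum mxE. Qed.

Lemma Psum_pos n I (r : seq I) (F : I -> 'M[H -> H]_n) :
  (forall m, List.In m r -> mx_positive ip (F m)) -> mx_positive ip (Psum r F).
Proof.
move=> hF xi.
have -> : \sum_(i < n) \sum_(j < n) ip (Psum r F i j (xi j)) (xi i) =
   \sum_(m <- r) \sum_(i < n) \sum_(j < n) ip (F m i j (xi j)) (xi i).
  rewrite [RHS]exchange_big /=; apply: eq_bigr => k _.
  rewrite [RHS]exchange_big /=; apply: eq_bigr => l _.
  by rewrite PsumE ip_suml.
elim: r hF => [|a r IH] hF; first by rewrite big_nil.
rewrite big_cons addr_ge0 //; first by apply: hF; left.
by apply: IH => m hm; apply: hF; right.
Qed.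

Variable S : (H -> H) -> Prop.
Hypothesis hS : operator_system ip S.

Lemma S_comb a b T U : S T -> S U -> S (fun x => a *: T x + b *: U x).
Proof.
case: hS => _ h0 hc _ sT sU.
have sbU : S (fun x => b *: U x).
  have := hc b U _ sU h0.
  by have -> : (fun x => b *: U x + 0) = (fun x => b *: U x)
    by apply: functional_extensionality => x; rewrite addr0.
exact: hc.
Qed.

Lemma S_scale a T : S T -> S (fun x => a *: T x).
Proof.
case: hS => _ h0 hc _ sT.
have := hc a T _ sT h0.
by have -> : (fun x => a *: T x + 0) = (fun x => a *: T x)
    by apply: functional_extensionality => x; rewrite addr0.
Qed.

Lemma S_add T U : S T -> S U -> S (fun x => T x + U x).
Proof.
case: hS => _ h0 hc _ sT sU.
have := hc 1 T U sT sU.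
by have -> : (fun x => 1 *: T x + U x) = (fun x => T x + U x)
    by apply: functional_extensionality => x; rewrite scale1r.
Qed.

Lemma rk_in n s (v : 'I_n -> C) A : S A -> in_Mn S (rk s v A).
Proof.
move=> sA k l; rewrite /rk mxE; exact: S_scale.
Qed.

Lemma Psum_in n I (r : seq I) (F : I -> 'M[H -> H]_n) :
  (forall m, List.In m r -> in_Mn S (F m)) -> in_Mn S (Psum r F).
Proof.
move=> hF k l; rewrite /Psum mxE.
elim: r hF => [|a r IH] hF.
  have -> : (fun x : H => \sum_(m <- [::]) F m k l x) = (fun _ => 0).
    by apply: functional_extensionality => x; rewrite big_nil.
  by case: hS.
have -> : (fun x : H => \sum_(m <- a :: r) F m k l x) =
   (fun x => F a k l x + \sum_(m <- r) F m k l x).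
  by apply: functional_extensionality => x; rewrite big_cons.
apply: S_add; first by apply: hF; left.
by apply: IH => m hm; apply: hF; right.
Qed.


End Aux.

Section Alg.
Variable R : realType.
Local Notation C := (R[i]).
Variable H : lmodType C.

Definition phi (u1 u2 u3 u4 : H) (a b c d : C) := (a *: u1 + b *: u2) + (c *: u3 + d *: u4).

Lemma phiD u1 u2 u3 u4 a b c d a' b' c' d' :
  phi u1 u2 u3 u4 a b c d + phi u1 u2 u3 u4 a' b' c' d' =
  phi u1 u2 u3 u4 (a + a') (b + b') (c + c') (d + d').
Proof. by rewrite /phi addrACA (addrACA (a *: u1)) (addrACA (c *: u3)) !scalerDl. Qed.

Lemma phiB u1 u2 u3 u4 a b c d a' b' c' d' :
  phi u1 u2 u3 u4 a b c d - phi u1 u2 u3 u4 a' b' c' d' =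
  phi u1 u2 u3 u4 (a - a') (b - b') (c - c') (d - d').
Proof.
have -> : - phi u1 u2 u3 u4 a' b' c' d' = phi u1 u2 u3 u4 (- a') (- b') (- c') (- d').
  by rewrite /phi !opprD !scaleNr.
by rewrite phiD.
Qed.

Lemma phiZ u1 u2 u3 u4 s a b c d :
  s *: phi u1 u2 u3 u4 a b c d = phi u1 u2 u3 u4 (s * a) (s * b) (s * c) (s * d).
Proof. by rewrite /phi !scalerDr !scalerA. Qed.

Lemma phi13 u1 u2 u3 u4 s : s *: (u1 + u3) = phi u1 u2 u3 u4 s 0 s 0.
Proof. by rewrite /phi !scale0r !addr0 scalerDr. Qed.
Lemma phi24 u1 u2 u3 u4 s : s *: (u2 + u4) = phi u1 u2 u3 u4 0 s 0 s.
Proof. by rewrite /phi !scale0r !add0r scalerDr. Qed.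
Lemma phi1 u1 u2 u3 u4 s : s *: u1 = phi u1 u2 u3 u4 s 0 0 0.
Proof. by rewrite /phi !scale0r !addr0. Qed.
Lemma phi2 u1 u2 u3 u4 s : s *: u2 = phi u1 u2 u3 u4 0 s 0 0.
Proof. by rewrite /phi !scale0r !addr0 add0r. Qed.

Definition sv (c : C) (x y : bool) : C := x%:R + c * y%:R.
Definition sc (q c : C) (x y x' y' : bool) : C := q * sv c x y * (sv c x' y')^*.

Lemma key2 (q : C) (ki kj li lj : bool) (Ax Bx Cx Dx u3 u4 : H) :
  q = 4%:R^-1 -> Ax = Bx + u3 -> Cx = Dx + u4 ->
  (sc q 1 ki kj li lj *: Ax + (sc q 0 ki ki li li *: Bx + (sc q 0 kj kj lj lj *: Bx +
   (sc q (-'i) ki kj li lj *: Cx + (sc q 0 ki ki li li *: Dx + (sc q 0 kj kj lj lj *: Dx + 0))))))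
  - (sc q 0 ki ki li li *: Ax + (sc q 0 kj kj lj lj *: Ax + (sc q 1 ki kj li lj *: Bx +
   (sc q 0 ki ki li li *: Cx + (sc q 0 kj kj lj lj *: Cx + (sc q (-'i) ki kj li lj *: Dx + 0))))))
  = (2%:R^-1 * ki%:R * lj%:R) *: phi Bx Dx u3 u4 0 0 (2%:R^-1) ('i / 2%:R)
    + (2%:R^-1 * kj%:R * li%:R) *: phi Bx Dx u3 u4 0 0 (2%:R^-1) (- ('i / 2%:R)).
Proof.
move=> -> -> ->.
rewrite !addr0 !(phi13 Bx Dx u3 u4) !(phi24 Bx Dx u3 u4) !(phi1 Bx Dx u3 u4) !(phi2 Bx Dx u3 u4).
rewrite !phiD phiB !phiZ phiD.
have hi : 'i * 'i = -1 :> C by rewrite -expr2 sqrCi.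
have c1 : (1 : C)^* = 1 by rewrite conjC1.
have c0 : (0 : C)^* = 0 by rewrite conjC0.
have ci : (- 'i : C)^* = 'i by rewrite rmorphN /= conjCi opprK.
rewrite /sc /sv !rmorphD !rmorphM /= !rmorph_nat c1 c0 ci.
congr phi; try by field.
apply/eqP; rewrite -subr_eq0; apply/eqP.
transitivity ((('i : C) * 'i + 1) * (- (4%:R^-1 * kj%:R * lj%:R))); first by field.
by rewrite hi addNr mul0r.
Qed.

Lemma ieq (L M K : C) : L - M = ('i * 'i + 1) * K -> L = M.
Proof.
have hi : 'i * 'i = -1 :> C by rewrite -expr2 sqrCi.
by rewrite hi addNr mul0r => /eqP; rewrite subr_eq0 => /eqP.
Qed.

Lemma tdec (Bx Dx t t' : H) :
  phi Bx Dx (t + t') ((- 'i) *: t + 'i *: t') 0 0 (2%:R^-1) ('i / 2%:R) = t /\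
  phi Bx Dx (t + t') ((- 'i) *: t + 'i *: t') 0 0 (2%:R^-1) (- ('i / 2%:R)) = t'.
Proof.
split; rewrite /phi !scale0r !add0r !scalerDr !scalerA addrACA -!scalerDl.
  have -> : (2%:R^-1 + 'i / 2%:R * - 'i : C) = 1 by apply: (@ieq _ _ (- 2%:R^-1)); field.
  have -> : (2%:R^-1 + 'i / 2%:R * 'i : C) = 0 by apply: (@ieq _ _ (2%:R^-1)); field.
  by rewrite scale1r scale0r addr0.
have -> : (2%:R^-1 + - ('i / 2%:R) * - 'i : C) = 0 by apply: (@ieq _ _ (2%:R^-1)); field.
have -> : (2%:R^-1 + - ('i / 2%:R) * 'i : C) = 1 by apply: (@ieq _ _ (- 2%:R^-1)); field.
by rewrite scale1r scale0r add0r.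
Qed.

End Alg.

Definition vec (R : realType) n (c : R[i]) (i j : 'I_n) : 'I_n -> R[i] :=
  fun k => sv c (k == i) (k == j).

Theorem proposition8p4 (R : realType) (H : lmodType R[i]) (ip : H -> H -> R[i])
    (hH : hilbert_space ip) (S : (H -> H) -> Prop) (hS : operator_system ip S)
    (hpos : positively_generated ip S) :
  forall n : nat, (1 <= n)%N -> mx_positively_generated ip S n.
Proof.
move=> n _ X hX hXsa.
have hip : inner_product ip by case: hH.
have hlin : forall T, S T -> lin T.
  by case: hS => hb _ _ _ T sT; case: (hb T sT).
pose T1 := fun (p : 'I_n * 'I_n) (x : H) => X p.1 p.2 x + X p.2 p.1 x.
pose T2 := fun (p : 'I_n * 'I_n) (x : H) => (- 'i) *: X p.1 p.2 x + 'i *: X p.2 p.1 x.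
have sT1 : forall p, S (T1 p) by move=> p; apply: (S_add hS); apply: hX.
have sT2 : forall p, S (T2 p) by move=> p; apply: (S_comb hS); apply: hX.
have aT1 : forall p, is_adjoint ip (T1 p) (T1 p).
  move=> p x y; rewrite /T1 ipDl // ipDr // (hXsa p.1 p.2) (hXsa p.2 p.1) addrC.
  done.
have aT2 : forall p, is_adjoint ip (T2 p) (T2 p).
  move=> p x y; rewrite /T2 ipDl // ipDr //.
  rewrite (ipZl hip (- 'i)) (ipZl hip 'i) (ipZr hip (- 'i)) (ipZr hip 'i).
  rewrite (hXsa p.1 p.2) (hXsa p.2 p.1) addrC.
  have ci : (- 'i : R[i])^* = 'i by rewrite rmorphN /= conjCi opprK.
  have ci' : ('i : R[i])^* = - 'i by rewrite conjCi.
  by rewrite ci ci'.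
have exAB : forall p, exists AB : (H -> H) * (H -> H),
    [/\ S AB.1, posop ip AB.1, S AB.2, posop ip AB.2 & forall x, T1 p x = AB.1 x - AB.2 x].
  move=> p; have [P [Q [? ? ? ? ?]]] := hpos (T1 p) (sT1 p) (aT1 p).
  by exists (P, Q).
have exCD : forall p, exists AB : (H -> H) * (H -> H),
    [/\ S AB.1, posop ip AB.1, S AB.2, posop ip AB.2 & forall x, T2 p x = AB.1 x - AB.2 x].
  move=> p; have [P [Q [? ? ? ? ?]]] := hpos (T2 p) (sT2 p) (aT2 p).
  by exists (P, Q).
have [fAB hAB] := functional_choice _ exAB.
have [fCD hCD] := functional_choice _ exCD.
pose q : R[i] := 4%:R^-1.
have q0 : 0 <= q by rewrite /q invr_ge0 ler0n.
pose Pfam := fun p : 'I_n * 'I_n =>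
  Psum [:: rk q (vec 1 p.1 p.2) (fAB p).1; rk q (vec 0 p.1 p.1) (fAB p).2;
           rk q (vec 0 p.2 p.2) (fAB p).2; rk q (vec (- 'i) p.1 p.2) (fCD p).1;
           rk q (vec 0 p.1 p.1) (fCD p).2; rk q (vec 0 p.2 p.2) (fCD p).2] id.
pose Qfam := fun p : 'I_n * 'I_n =>
  Psum [:: rk q (vec 0 p.1 p.1) (fAB p).1; rk q (vec 0 p.2 p.2) (fAB p).1;
           rk q (vec 1 p.1 p.2) (fAB p).2; rk q (vec 0 p.1 p.1) (fCD p).1;
           rk q (vec 0 p.2 p.2) (fCD p).1; rk q (vec (- 'i) p.1 p.2) (fCD p).2] id.
exists (Psum (index_enum _) Pfam), (Psum (index_enum _) Qfam).
split.
- apply: (Psum_in hS) => p _; apply: (Psum_in hS) => m /=.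
  case: (hAB p) => ? ? ? ? _; case: (hCD p) => ? ? ? ? _.
  by move=> [<-|[<-|[<-|[<-|[<-|[<-|[]]]]]]]; apply: (rk_in hS).
- apply: (Psum_pos hip) => p _; apply: (Psum_pos hip) => m /=.
  case: (hAB p) => s1 p1 s2 p2 _; case: (hCD p) => s3 p3 s4 p4 _.
  by move=> [<-|[<-|[<-|[<-|[<-|[<-|[]]]]]]]; apply: (rk_pos hip) => //; apply: hlin.
- apply: (Psum_in hS) => p _; apply: (Psum_in hS) => m /=.
  case: (hAB p) => ? ? ? ? _; case: (hCD p) => ? ? ? ? _.
  by move=> [<-|[<-|[<-|[<-|[<-|[<-|[]]]]]]]; apply: (rk_in hS).
- apply: (Psum_pos hip) => p _; apply: (Psum_pos hip) => m /=.
  case: (hAB p) => s1 p1 s2 p2 _; case: (hCD p) => s3 p3 s4 p4 _.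
  by move=> [<-|[<-|[<-|[<-|[<-|[<-|[]]]]]]]; apply: (rk_pos hip) => //; apply: hlin.
move=> k l x.
have hp : forall p : 'I_n * 'I_n, Pfam p k l x - Qfam p k l x =
    (2%:R^-1 * (k == p.1)%:R * (l == p.2)%:R) *: X p.1 p.2 x +
    (2%:R^-1 * (k == p.2)%:R * (l == p.1)%:R) *: X p.2 p.1 x.
  move=> p.
  case: (hAB p) => _ _ _ _ e1; case: (hCD p) => _ _ _ _ e2.
  rewrite /Pfam /Qfam !PsumE !big_cons big_nil !rkE.
  apply: etrans.
    apply: (@key2 _ _ q _ _ _ _ _ _ _ _ (X p.1 p.2 x + X p.2 p.1 x)
              ((- 'i) *: X p.1 p.2 x + 'i *: X p.2 p.1 x)).
    - by [].
    - by move: (e1 x); rewrite /T1 => ->; rewrite addrC subrK.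
    - by move: (e2 x); rewrite /T2 => ->; rewrite addrC subrK.
  by have [-> ->] := tdec ((fAB p).2 x) ((fCD p).2 x) (X p.1 p.2 x) (X p.2 p.1 x).
rewrite !PsumE -sumrB.
under eq_bigr => p _ do rewrite hp.
rewrite big_split /=.
have E1 : \sum_(p <- index_enum _) (2%:R^-1 * (k == p.1)%:R * (l == p.2)%:R) *: X p.1 p.2 x
    = 2%:R^-1 *: X k l x.
  rewrite (bigD1_seq (k, l)) ?mem_index_enum ?index_enum_uniq //= !eqxx !mulr1.
  rewrite big1_seq ?addr0 // => -[i j] /andP [hne _] /=.
  case: eqP => [ki|_]; last by rewrite mulr0 mul0r scale0r.
  case: eqP => [lj|_]; last by rewrite mulr0 scale0r.
  by subst; rewrite eqxx in hne.
have E2 : \sum_(p <- index_enum _) (2%:R^-1 * (k == p.2)%:R * (l == p.1)%:R) *: X p.2 p.1 x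
    = 2%:R^-1 *: X k l x.
  rewrite (bigD1_seq (l, k)) ?mem_index_enum ?index_enum_uniq //= !eqxx !mulr1.
  rewrite big1_seq ?addr0 // => -[i j] /andP [hne _] /=.
  case: eqP => [ki|_]; last by rewrite mulr0 mul0r scale0r.
  case: eqP => [lj|_]; last by rewrite mulr0 scale0r.
  by subst; rewrite eqxx in hne.
rewrite E1 E2 -scalerDl.
have -> : (2%:R^-1 + 2%:R^-1 : R[i]) = 1 by field.
by rewrite scale1r.
Qed.
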